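(* Let $n \ge 1$, let $N=\{1,\dots,n\}$ be a set of agents, $A=[0,1]$, and let $f$ be an ordered weighted average (OWA) mechanism with weights $w_1,\dots,w_n \in [0,1]$, $\sum_{j=1}^n w_j = 1$. Then $f$ is not obviously manipulable (NOM) if and only if either (i) $w_j = 1$ for some $j \in \{1,\dots,n\}$, or (ii) $w_1 = w_n = 0$.
   Context: A mechanism is a map $f: A^n \to A$ taking a profile $x=(x_i)_{i\in N}$ of reported locations (peaks) and returning a facility location. For $x_i$ the true location of agent $i$ and $y\in A$ the facility location, agent $i$'s utility is $u(x_i,y) = 1-|x_i-y|$. Write $f(x_i', x_{-i})$ for the output when agent $i$ reports $x_i'$ and the others report $x_{-i}\in A^{n-1}$. An OWA mechanism with weights $w_1,\dots,w_n$ returns $f(x)=\sum_{j=1}^n w_j x_{\pi(j)}$, where $\pi$ is a permutation of $N$ with $x_{\pi(1)}\le x_{\pi(2)}\le\dots\le x_{\pi(n)}$ (the $j$-th weight is applied to the $j$-th smallest report). $f$ satisfies NOM if for every $i\in N$ and all $x_i, x_i' \in A$: $\max_{x_{-i}\in A^{n-1}} u(x_i, f(x_i,x_{-i})) \ge \max_{x_{-i}\in A^{n-1}} u(x_i, f(x_i',x_{-i}))$ and $\min_{x_{-i}\in A^{n-1}} u(x_i, f(x_i,x_{-i})) \ge \min_{x_{-i}\in A^{n-1}} u(x_i, f(x_i',x_{-i}))$. *)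

(* Defs.v *)
From mathcomp Require Import all_boot all_order all_algebra.
From mathcomp Require Import boolp classical_sets reals.
Set Implicit Arguments. Unset Strict Implicit. Unset Printing Implicit Defensive.
Import Order.TTheory GRing.Theory Num.Theory.
Local Open Scope ring_scope.
Local Open Scope classical_set_scope.

Section Facility.
Variables (R : realType) (n : nat).

Definition inA (a : R) : Prop := 0 <= a <= 1.
Definition profile_in_A (x : 'I_n -> R) : Prop := forall j, inA (x j).

Definition util (xi y : R) : R := 1 - `|xi - y|.

Definition upd (x : 'I_n -> R) (i : 'I_n) (a : R) : 'I_n -> R :=
  fun j => if j == i then a else x j.

(* OWA mechanism: the j-th weight is applied to the j-th smallest report *)
Definition sorted_reports (x : 'I_n -> R) : seq R :=
  sort <=%R [seq x j | j <- enum 'I_n].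
Definition owa (w : 'I_n -> R) (x : 'I_n -> R) : R :=
  \sum_(j < n) w j * nth 0 (sorted_reports x) j.

(* best / worst utility of truthful agent with peak xi reporting a,
   over all reports x_{-i} in A^{n-1} of the others (the maxima/minima
   exist for OWA mechanisms; sup/inf coincide with max/min then) *)
Definition util_set (f : ('I_n -> R) -> R) (i : 'I_n) (xi a : R) : set R :=
  [set util xi (f (upd x i a)) | x in profile_in_A].

Definition NOM (f : ('I_n -> R) -> R) : Prop :=
  forall (i : 'I_n) (xi xi' : R), inA xi -> inA xi' ->
    sup (util_set f i xi xi) >= sup (util_set f i xi xi') /\
    inf (util_set f i xi xi) >= inf (util_set f i xi xi').

End Facility.

Definition first_agent (n : nat) (hn : (0 < n)%N) : 'I_n := Ordinal hn.
Lemma last_agent_proof (n : nat) (hn : (0 < n)%N) : (n.-1 < n)%N.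
Proof. by rewrite prednK. Qed.
Definition last_agent (n : nat) (hn : (0 < n)%N) : 'I_n :=
  Ordinal (last_agent_proof hn).

(* Main.v *)
Require Import Defs.
From mathcomp Require Import all_boot all_order all_algebra.
From mathcomp Require Import boolp classical_sets reals.
From mathcomp Require Import lra.
Import Order.TTheory GRing.Theory Num.Theory.
Local Open Scope ring_scope.
Set Implicit Arguments. Unset Strict Implicit. Unset Printing Implicit Defensive.

Section H.
Variables (R : realType) (m : nat).
Local Notation n := m.+1.
Implicit Types (y : 'I_n -> R).

Lemma size_sr y : size (sorted_reports y) = n.
Proof. by rewrite size_sort size_map size_enum_ord. Qed.

Lemma mem_sr y v : v \in sorted_reports y -> exists j, v = y j.
Proof. by rewrite mem_sort => /mapP [j _ ->]; exists j. Qed.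

Lemma sr_in y v : y = y -> (exists j, v = y j) -> v \in sorted_reports y.
Proof. by move=> _ [j ->]; rewrite mem_sort; apply: map_f; rewrite mem_enum. Qed.

Lemma nth_sr y (j : nat) : (j < n)%N -> exists k, nth 0 (sorted_reports y) j = y k.
Proof. by move=> hj; apply: mem_sr; apply: mem_nth; rewrite size_sr. Qed.

Lemma sr_mono y (j k : nat) : (j <= k)%N -> (k < n)%N ->
  nth 0 (sorted_reports y) j <= nth 0 (sorted_reports y) k.
Proof.
move=> hjk hk; apply: (sorted_leq_nth le_trans lexx) => //.
- exact: sort_le_sorted.
- by rewrite inE size_sr (leq_ltn_trans hjk hk).
- by rewrite inE size_sr.
Qed.

Lemma sr_pos y i : exists2 k, (k < n)%N & nth 0 (sorted_reports y) k = y i.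
Proof.
have hin : y i \in sorted_reports y by apply: sr_in => //; exists i.
move/nthP: hin => /(_ 0) [k hk <-]; exists k => //; by rewrite -(size_sr y).
Qed.

Lemma sr_min y i : nth 0 (sorted_reports y) 0 <= y i.
Proof. have [k hk <-] := sr_pos y i; exact: sr_mono. Qed.

Lemma sr_max y i : y i <= nth 0 (sorted_reports y) m.
Proof. have [k hk <-] := sr_pos y i; apply: sr_mono => //; by rewrite -ltnS. Qed.

Lemma sr_sum y : \sum_(j < n) nth 0 (sorted_reports y) j = \sum_(j < n) y j.
Proof.
have -> : \sum_(j < n) y j = \sum_(v <- sorted_reports y) v.
  have hp : perm_eq (sorted_reports y) [seq y j | j <- enum 'I_n].
    by rewrite /sorted_reports perm_sort.
  by rewrite (perm_big _ hp) big_map big_enum.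
by rewrite [RHS](big_nth 0) size_sr big_mkord.
Qed.

Lemma sr_inA y : profile_in_A y -> forall j : 'I_n, inA (nth 0 (sorted_reports y) j).
Proof. by move=> hy j; have [k ->] := nth_sr y (ltn_ord j); apply: hy. Qed.

Variable w : 'I_n -> R.
Hypothesis Hw : forall j, 0 <= w j <= 1.
Hypothesis Hs : \sum_(j < n) w j = 1.
Local Notation p := (w ord_max).
Local Notation q := (w ord0).
Local Notation s y := (nth 0 (sorted_reports y)).

Lemma owa_lb y i : profile_in_A y -> p * y i <= owa w y.
Proof.
move=> hy; rewrite /owa big_ord_recr /=.
have h1 : 0 <= \sum_(j < m) w (widen_ord (leqnSn m) j) * s y j.
  apply: sumr_ge0 => j _; apply: mulr_ge0; first by case/andP: (Hw (widen_ord (leqnSn m) j)).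
  by case/andP: (sr_inA hy (widen_ord (leqnSn m) j)).
have h2 := sr_max y i. have := Hw ord_max => /andP[h3 _].
have : p * y i <= p * s y m by apply: ler_wpM2l.
lra.
Qed.

Lemma sum_tail : \sum_(j < m) w (lift ord0 j) = 1 - q.
Proof. by rewrite -Hs big_ord_recl addrC addKr. Qed.

Lemma owa_ub y i : profile_in_A y -> owa w y <= q * y i + (1 - q).
Proof.
move=> hy; rewrite /owa big_ord_recl /= -sum_tail.
have h1 : \sum_(j < m) w (lift ord0 j) * s y (lift ord0 j) <= \sum_(j < m) w (lift ord0 j).
  apply: ler_sum => j _; have /andP[a1 a2] := Hw (lift ord0 j).
  have /andP[b1 b2] := sr_inA hy (lift ord0 j). nra.
have h2 := sr_min y i. have := Hw ord0 => /andP[h3 _].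
have : q * s y 0 <= q * y i by apply: ler_wpM2l.
lra.
Qed.

Definition zprof (i : 'I_n) (a : R) : 'I_n -> R := upd (fun _ => 0) i a.
Definition oprof (i : 'I_n) (a : R) : 'I_n -> R := upd (fun _ => 1) i a.

Lemma zprof_A i a : inA a -> profile_in_A (zprof i a).
Proof. by move=> ha j; rewrite /zprof /upd; case: ifP => // _; rewrite /inA lexx ler01. Qed.
Lemma oprof_A i a : inA a -> profile_in_A (oprof i a).
Proof. by move=> ha j; rewrite /oprof /upd; case: ifP => // _; rewrite /inA lexx ler01. Qed.

Lemma owa_zero i a : inA a -> owa w (zprof i a) = p * a.
Proof.
move=> ha; have hy := zprof_A i ha.
apply/eqP; rewrite eq_le; apply/andP; split; last first.
  by have := owa_lb i hy; rewrite /zprof /upd eqxx.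
have hsum : \sum_(j < n) s (zprof i a) j = a.
  rewrite sr_sum /zprof /upd -big_mkcond /=.
  by rewrite (big_pred1_eq _ i (fun _ => a)).
move: hsum; rewrite /owa !big_ord_recr /= => hsum.
have h1 : \sum_(j < m) w (widen_ord (leqnSn m) j) * s (zprof i a) (widen_ord (leqnSn m) j)
   <= \sum_(j < m) s (zprof i a) (widen_ord (leqnSn m) j).
  apply: ler_sum => j _; have /andP[a1 a2] := Hw (widen_ord (leqnSn m) j).
  have /andP[b1 b2] := sr_inA hy (widen_ord (leqnSn m) j). nra.
have h2 := sr_max (zprof i a) i. move: h2; rewrite {1}/zprof /upd eqxx => h2.
have /andP[h3 h4] := Hw ord_max.
nra.
Qed.

Lemma owa_one i a : inA a -> owa w (oprof i a) = q * a + (1 - q).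
Proof.
move=> ha; have hy := oprof_A i ha.
apply/eqP; rewrite eq_le; apply/andP; split.
  by have := owa_ub i hy; rewrite /oprof /upd eqxx.
have hsum : \sum_(j < n) (1 - s (oprof i a) j) = 1 - a.
  rewrite sumrB sr_sum -sumrB /oprof /upd.
  rewrite (eq_bigr (fun j => if j == i then 1 - a else 0)); last first.
    by move=> j _; case: ifP => // _; rewrite subrr.
  by rewrite -big_mkcond /= (big_pred1_eq _ i (fun _ => 1 - a)).
move: hsum; rewrite /owa !big_ord_recl /= => hsum.
have h1 : \sum_(j < m) w (lift ord0 j) - \sum_(j < m) (1 - s (oprof i a) (lift ord0 j))
   <= \sum_(j < m) w (lift ord0 j) * s (oprof i a) (lift ord0 j).
  rewrite -sumrB; apply: ler_sum => j _; have /andP[a1 a2] := Hw (lift ord0 j).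
  have /andP[b1 b2] := sr_inA hy (lift ord0 j). nra.
move: h1; rewrite sum_tail => h1.
have h2 := sr_min (oprof i a) i. move: h2; rewrite {2}/oprof /upd eqxx => h2.
have /andP[h3 h4] := Hw ord0.
nra.
Qed.

Lemma owa_const y c : (forall j, y j = c) -> owa w y = c.
Proof.
move=> hy; rewrite /owa (eq_bigr (fun j => w j * c)); first by rewrite -mulr_suml Hs mul1r.
by move=> j _; have [k ->] := nth_sr y (ltn_ord j); rewrite hy.
Qed.

Local Notation S := (util_set (owa w)).

Lemma util_le1 (xi y : R) : util xi y <= 1.
Proof. by rewrite /util lerBlDr lerDl normr_ge0. Qed.

Lemma S_ub i xi a : ubound (S i xi a) 1.
Proof. by move=> v [y _ <-]; apply: util_le1. Qed.

Lemma S_lb i xi a d : inA a -> xi - p * a <= d -> q * a + (1 - q) - xi <= d ->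
  lbound (S i xi a) (1 - d).
Proof.
move=> ha h1 h2 v [y hy <-].
have hy' : profile_in_A (upd y i a).
  by move=> j; rewrite /upd; case: ifP.
have l1 := owa_lb i hy'. have l2 := owa_ub i hy'.
move: l1 l2; rewrite /upd eqxx -/(upd y i a) => l1 l2.
rewrite /util lerD2l lerN2.
have [hle|hlt] := lerP (owa w (upd y i a)) xi.
  lra.
lra.
Qed.

Lemma S_zero i xi a : inA a -> S i xi a (util xi (p * a)).
Proof. by move=> ha; exists (fun _ => 0); [move=> j; rewrite /inA lexx ler01 | rewrite -(owa_zero i ha)]. Qed.

Lemma S_one i xi a : inA a -> S i xi a (util xi (q * a + (1 - q))).
Proof. by move=> ha; exists (fun _ => 1); [move=> j; rewrite /inA lexx ler01 | rewrite -(owa_one i ha)]. Qed.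

Lemma S_truth i xi : inA xi -> S i xi xi 1.
Proof.
move=> hx; exists (fun _ => xi) => //.
rewrite (@owa_const _ xi); first by rewrite /util subrr normr0 subr0.
by move=> j; rewrite /upd; case: ifP.
Qed.

Lemma one_others j : w j = 1 -> forall k, k != j -> w k = 0.
Proof.
move=> hj k hk.
have h0 : \sum_(l < n | l != j) w l = 0.
  by move: Hs; rewrite (bigD1 j) //= hj -[X in _ = X](addr0 1) => /addrI.
have := psumr_eq0P _ h0; apply => // l _; by case/andP: (Hw l).
Qed.

Lemma has_lb i xi a : inA xi -> inA a -> has_lbound (S i xi a).
Proof.
move=> /andP[x1 x2] ha; exists (1 - 1); apply: S_lb => //;
have /andP[p1 p2] := Hw ord_max; have /andP[q1 q2] := Hw ord0; case/andP: ha => a1 a2; nra.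
Qed.

Lemma main_m : NOM (owa w) <-> ((exists j, w j = 1) \/ (q = 0 /\ p = 0)).
Proof.
have /andP[p1 p2] := Hw ord_max; have /andP[q1 q2] := Hw ord0.
split.
- move=> HN.
  case: (pselect (exists j, w j = 1)) => [|hno]; [by left|right].
  have hp : p < 1 by rewrite lt_neqAle p2 andbT; apply/eqP => h; apply: hno; exists ord_max.
  have hq : q < 1 by rewrite lt_neqAle q2 andbT; apply/eqP => h; apply: hno; exists ord0.
  have [p0|pn0] := eqVneq p 0; last first.
  + exfalso; have pp : 0 < p by rewrite lt_neqAle eq_sym pn0.
    set xi := 1 - (1 - p) / 4.
    have hx : inA xi by rewrite /inA /xi; apply/andP; split; lra.
    have ha : inA (1 : R) by rewrite /inA ler01 lexx.
    have [_ hinf] := HN ord0 xi 1 hx ha.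
    have e1 : inf (S ord0 xi xi) <= util xi (p * xi).
      by apply: (ge_inf (has_lb ord0 hx hx)); apply: S_zero.
    set d := Num.max (xi - p * 1) (q * 1 + (1 - q) - xi).
    have e2 : 1 - d <= inf (S ord0 xi 1).
      apply: lb_le_inf; first by exists (util xi (p * 1)); apply: S_zero.
      by apply: S_lb => //; rewrite le_max lexx ?orbT.
    have e3 : d < xi - p * xi.
      rewrite gt_max; apply/andP; split; rewrite /xi; nra.
    move: e1; rewrite /util ger0_norm; last by rewrite /xi; nra.
    lra.
  + have [q0|qn0] := eqVneq q 0; first by split.
    exfalso; have qp : 0 < q by rewrite lt_neqAle eq_sym qn0.
    set xi := (1 - q) / 4.
    have hx : inA xi by rewrite /inA /xi; apply/andP; split; lra.
    have ha : inA (0 : R) by rewrite /inA ler01 lexx.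
    have [_ hinf] := HN ord0 xi 0 hx ha.
    have e1 : inf (S ord0 xi xi) <= util xi (q * xi + (1 - q)).
      by apply: (ge_inf (has_lb ord0 hx hx)); apply: S_one.
    set d := Num.max (xi - p * 0) (q * 0 + (1 - q) - xi).
    have e2 : 1 - d <= inf (S ord0 xi 0).
      apply: lb_le_inf; first by exists (util xi (p * 0)); apply: S_zero.
      by apply: S_lb => //; rewrite le_max lexx ?orbT.
    have e3 : d < q * xi + (1 - q) - xi.
      rewrite gt_max; apply/andP; split; rewrite /xi; nra.
    move: e1; rewrite /util distrC ger0_norm; last by rewrite /xi; nra.
    lra.
- move=> H.
  have pq : (p = 0 \/ p = 1) /\ (q = 0 \/ q = 1).
    case: H => [[j hj]|[-> ->]]; last by split; left.
    split.
      have [e|ne] := eqVneq ord_max j; first by right; rewrite e.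
      by left; apply: one_others hj _ ne.
    have [e|ne] := eqVneq (ord0 : 'I_n) j; first by right; rewrite e.
    by left; apply: one_others hj _ ne.
  move=> i xi a hx ha; split.
  + apply: (@le_trans _ _ 1).
      apply: ge_sup; last exact: S_ub.
      by exists (util xi (p * a)); apply: S_zero.
    have hub : has_ubound (S i xi xi) by exists 1; exact: S_ub.
    exact: (ub_le_sup hub (S_truth i hx)).
  + set c1 := xi - p * xi. set c2 := q * xi + (1 - q) - xi.
    have [d [hd1 [hd2 hd3]]] : exists d, c1 <= d /\ c2 <= d /\
        (d <= xi - p * a \/ d <= q * a + (1 - q) - xi).
      move: hx ha; rewrite /inA /c1 /c2 => /andP[x1 x2] /andP[a1 a2].
      have [h|h] := lerP c1 c2; [exists c2 | exists c1]; move: h; rewrite /c1 /c2;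
      case: pq => [[]->[]->]; (have [h'|h'] := lerP xi a); move=> h; split; lra.
    have e2 : 1 - d <= inf (S i xi xi).
      apply: lb_le_inf; first by exists 1; apply: S_truth.
      exact: S_lb.
    apply: le_trans e2.
    case: hd3 => hd3.
    * apply: (le_trans (ge_inf (has_lb i hx ha) (S_zero i xi ha))).
      rewrite /util lerD2l lerN2; apply: (le_trans hd3); exact: ler_norm.
    * apply: (le_trans (ge_inf (has_lb i hx ha) (S_one i xi ha))).
      rewrite /util lerD2l lerN2 distrC; apply: (le_trans hd3); exact: ler_norm.
Qed.
End H.

Theorem theorem2 (R : realType) (n : nat) (hn : (0 < n)%N) (w : 'I_n -> R) :
  (forall j, 0 <= w j <= 1) ->
  \sum_(j < n) w j = 1 ->
  (NOM (owa w) <->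
   ((exists j, w j = 1) \/ (w (first_agent hn) = 0 /\ w (last_agent hn) = 0))).
Proof.
case: n hn w => [//|m] hn w Hw Hs.
have -> : first_agent hn = ord0 by apply: val_inj.
have -> : last_agent hn = ord_max by apply: val_inj.
exact: main_m.
Qed.
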